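(* Consider an instance of the Nash equilibrium complementarity problem (NECP) that satisfies the dominance condition, and the corresponding instance of the tropical Nash equilibrium complementarity problem (TNECP) obtained by the logarithmic image, i.e. $M^-=\log(-M)$ and $q^+=\log q$ (entrywise, with $\log 0=-\infty$). Then the solutions of the two problems have the same supports.
   Context: NECP: given a square real matrix $M$ whose columns are nonpositive with at least one negative entry, and a vector $q$ with positive entries, find $(w,z)$ with $w=Mz+q$, $w^\top z=0$, $z\neq 0$, $w,z\geq 0$. TNECP over the max-plus semifield $\mathbb{T}=\mathbb{R}\cup\{-\infty\}$ ($\oplus=\max$, $\odot=+$): find $(w,z)\in\mathbb{T}^n\times\mathbb{T}^n$ with $w\oplus M^-\odot z=q^+$, $w^\top\odot z=-\infty$, $z\neq-\infty$. The support of a vector is the set of indices of its nonzero entries (classical) or non-$(-\infty)$ entries (tropical). Dominance condition: for a system $Ax=b$, $x\geq 0$ with $A\geq 0$ having a nonzero entry in every column and $b>0$, the normalized matrix is $(\operatorname{diag} b)^{-1}A(\operatorname{diag} u)^{-1}$ where $u_j$ is the largest entry of the $j$th column of $(\operatorname{diag} b)^{-1}A$; it is columnwise normal (entries in $[0,1]$, each column has a $1$-entry). A columnwise normal matrix with $n$ rows satisfies the dominance condition if (a) some $n\times n$ submatrix covers a permutation matrix (i.e. the difference is entrywise nonnegative), and (b) every $n\times n$ submatrix covering a permutation matrix has all row sums less than $2$. The NECP instance satisfies the dominance condition if the normalized matrix of the system $(I\ \ -M)\binom{w}{z}=q$ does. *)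

(* Defs.v *)
From HB Require Import structures.
From mathcomp Require Import all_boot all_order all_algebra all_fingroup.
From mathcomp Require Import all_classical all_reals all_analysis.
Set Implicit Arguments. Unset Strict Implicit. Unset Printing Implicit Defensive.
Import Order.TTheory GRing.Theory Num.Theory.
Local Open Scope ring_scope.

Section Defs.
Variable R : realType.

Definition supp n (v : 'cV[R]_n) : {set 'I_n} := [set i | v i 0 != 0].

Definition NECP_sol n (M : 'M[R]_n) (q w z : 'cV[R]_n) : Prop :=
  [/\ w = M *m z + q,
      \sum_(i < n) w i 0 * z i 0 = 0,
      z != 0,
      forall i, 0 <= w i 0 &
      forall i, 0 <= z i 0].

Definition col_scale n m (A : 'M[R]_(n, m)) (b : 'I_n -> R) (j : 'I_m) : R :=
  \big[Num.max/0]_(i < n) (A i j / b i).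

Definition normalized n m (A : 'M[R]_(n, m)) (b : 'I_n -> R) : 'M[R]_(n, m) :=
  \matrix_(i, j) (A i j / (b i * col_scale A b j)).

Definition covers_perm n (B : 'M[R]_n) : Prop :=
  exists s : 'S_n, forall i j, 0 <= B i j - perm_mx s i j.

(* dominance condition of a columnwise normal matrix N with n rows;
   n x n submatrices are given by injective column selections f *)
Definition dominance_mx n m (N : 'M[R]_(n, m)) : Prop :=
  (exists f : 'I_n -> 'I_m, injective f /\ covers_perm (colsub f N)) /\
  (forall f : 'I_n -> 'I_m, injective f -> covers_perm (colsub f N) ->
     forall i, \sum_(k < n) colsub f N i k < 2).

(* the NECP instance (M,q) satisfies the dominance condition:
   the normalized matrix of (I  -M)(w;z) = q does *)
Definition NECP_dominance n (M : 'M[R]_n) (q : 'cV[R]_n) : Prop :=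
  dominance_mx (normalized (row_mx 1%:M (- M)) (fun i => q i 0)).

Definition Tlog (x : R) : \bar R := if x == 0 then -oo%E else (ln x)%:E.

Definition tsupp n (v : 'I_n -> \bar R) : {set 'I_n} := [set i | v i != -oo%E].

(* (w,z) solves TNECP(Mm,qp) over the max-plus semifield:
   entries in T (not +oo), w (+) Mm (.) z = qp, w^T (.) z = -oo, z <> -oo *)
Definition TNECP_sol n (Mm : 'I_n -> 'I_n -> \bar R) (qp w z : 'I_n -> \bar R)
  : Prop :=
  [/\ forall i, w i != +oo%E /\ z i != +oo%E,
      forall i, maxe (w i) (\big[maxe/-oo%E]_(j < n) (Mm i j + z j)%E) = qp i,
      \big[maxe/-oo%E]_(i < n) (w i + z i)%E = -oo%E &
      exists i, z i != -oo%E].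

End Defs.

(* Main.v *)
From HB Require Import structures.
From mathcomp Require Import all_boot all_order all_algebra all_fingroup.
From mathcomp Require Import all_classical all_reals all_analysis.
From mathcomp Require Import ring lra.
Set Implicit Arguments. Unset Strict Implicit. Unset Printing Implicit Defensive.
Import Order.TTheory GRing.Theory Num.Theory.
Local Open Scope ring_scope.
Require Import Defs.

Lemma argmax_ex (R : realDomainType) n (f : 'I_n -> R) (i0 : 'I_n) :
  exists k, forall j, f j <= f k.
Proof.
exists [arg max_(k > i0) f k]%O.
by case: arg_maxP => // k _ H j; apply: H.
Qed.

Lemma inj_surj n (pi : 'I_n -> 'I_n) : injective pi -> forall k, exists i, pi i = k.
Proof.
move=> inj k; have := inj_card_onto inj (leqnn _) k.
by case/codomP => i ->; exists i.
Qed.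

Lemma sum_split (R : realDomainType) n (A : 'I_n -> R) (y : 'I_n -> R) k :
  A k = 1 ->
  \sum_j A j * y j = y k + \sum_(j | j != k) A j * y j.
Proof. by move=> Ak; rewrite (bigD1 k) //= Ak mul1r. Qed.

Lemma sum_split1 (R : realDomainType) n (A : 'I_n -> R) k :
  A k = 1 ->
  \sum_j A j = 1 + \sum_(j | j != k) A j.
Proof. by move=> Ak; rewrite (bigD1 k) //= Ak. Qed.

Lemma LA (R : realFieldType) n (A : 'M[R]_n) (pi : 'I_n -> 'I_n) :
  injective pi -> (forall i, A i (pi i) = 1) -> (forall i j, 0 <= A i j) ->
  (forall i, \sum_j A i j < 2) ->
  exists x : 'cV[R]_n, A *m x = const_mx 1 /\ forall i, 0 < x i 0 /\ x i 0 <= 1.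
Proof.
move=> inj Api A0 As.
have surj := inj_surj inj.
pose c i := \sum_(j | j != pi i) A i j.
have c0 i : 0 <= c i by apply: sumr_ge0 => j _.
have c1 i : c i < 1.
  by have := As i; rewrite (sum_split1 (Api i)) -/(c i); lra.
have Ax (x : 'cV[R]_n) i : (A *m x) i 0 = x (pi i) 0 + \sum_(j | j != pi i) A i j * x j 0.
  by rewrite mxE (sum_split (fun j => x j 0) (Api i)).
have ker (v : 'cV[R]_n) : A *m v = 0 -> v = 0.
  move=> Av; apply/matrixP => a b; rewrite (ord1 b) mxE.
  have [k Hk] := argmax_ex (fun j => `|v j 0|) a.
  have [i Hi] := surj k.
  have := Ax v i; rewrite Av mxE Hi => /esym E.
  have Ev : v k 0 = - \sum_(j | j != k) A i j * v j 0.
    by apply/eqP; rewrite -addr_eq0 E.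
  have : `|v k 0| <= c i * `|v k 0|.
    rewrite {1}Ev normrN /c Hi mulr_suml.
    apply: (le_trans (ler_norm_sum _ _ _)); apply: ler_sum => j _.
    by rewrite normrM ger0_norm // ler_wpM2l.
  move=> H; have := Hk a; have := c1 i; have := c0 i; have := normr_ge0 (v k 0).
  move=> h1 h2 h3 h4; apply/eqP; rewrite -normr_eq0 eq_le normr_ge0 andbT.
  nra.
have uA : A \in unitmx.
  rewrite -unitmx_tr -row_free_unit -kermx_eq0; apply/eqP/row_matrixP => i.
  rewrite row0.
  have : (row i (kermx A^T) <= kermx A^T)%MS by apply: row_sub.
  move/sub_kermxP => H.
  have := ker (row i (kermx A^T))^T; rewrite -[A in A *m _]trmxK -trmx_mul H trmx0.
  by move=> /(_ erefl) /(congr1 trmx); rewrite trmxK trmx0.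
exists (invmx A *m const_mx 1); split; first by rewrite mulKVmx.
set x := invmx A *m const_mx 1.
have Ax1 i : x (pi i) 0 + \sum_(j | j != pi i) A i j * x j 0 = 1.
  by rewrite -Ax /x mulKVmx // mxE.
move=> i0; clearbody x.
have [a Ha] := argmax_ex (fun j => - x j 0) i0.
have [b Hb] := argmax_ex (fun j => x j 0) i0.
have [ia Hia] := surj a; have [ib Hib] := surj b.
have La : \sum_(j | j != pi ia) A ia j * x j 0 <= c ia * x b 0.
  rewrite /c mulr_suml; apply: ler_sum => j _; by rewrite ler_wpM2l.
have Lb : c ib * x a 0 <= \sum_(j | j != pi ib) A ib j * x j 0.
  rewrite /c mulr_suml; apply: ler_sum => j _; rewrite ler_wpM2l //.
  by have := Ha j; rewrite lerN2.
clearbody c.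
have E1 := Ax1 ia; have E2 := Ax1 ib; rewrite Hia in E1 La; rewrite Hib in E2 Lb.
have := c0 ia; have := c1 ia; have := c0 ib; have := c1 ib.
move=> h1 h2 h3 h4.
move: E1 La E2 Lb.
set Sa := \sum_(j | j != a) _; set Sb := \sum_(j | j != b) _.
have := Ha i0; have := Hb i0; rewrite lerN2.
set xa := x a 0; set xb := x b 0; set xi := x i0 0.
clearbody Sa Sb xa xb xi => hb ha E1 La E2 Lb; clear Hia Hib.
have xa0 : 0 < xa.
  have H1 : c ia * xb <= c ia * (1 - c ib * xa) by rewrite ler_wpM2l //; lra.
  rewrite mulrBr mulr1 in H1.
  rewrite ltNge; apply/negP => xa0.
  have hc : c ia * c ib <= 1 by nra.
  have H2 : (1 - c ia * c ib) * xa <= 0 by rewrite mulr_ge0_le0 // subr_ge0.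
  rewrite mulrBl mul1r -mulrA in H2.
  lra.
split; first lra.
have : 0 <= c ib * xa by rewrite mulr_ge0 // ltW.
lra.
Qed.

Lemma sum_sub_le (R : numDomainType) (I : finType) (P Q : pred I) (F : I -> R) :
  (forall i, 0 <= F i) -> (forall i, P i -> Q i) ->
  \sum_(i | P i) F i <= \sum_(i | Q i) F i.
Proof.
move=> F0 PQ; rewrite [X in _ <= X](bigID P) /=.
have -> : \sum_(i | Q i && P i) F i = \sum_(i | P i) F i.
  apply: eq_bigl => i; case: (boolP (P i)) => h; last by rewrite andbF.
  by rewrite andbT PQ.
by rewrite lerDl sumr_ge0.
Qed.

Section Main.
Variables (R : realType) (n : nat) (M : 'M[R]_n) (q : 'cV[R]_n).
Hypothesis HMle0 : forall i j, M i j <= 0.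
Hypothesis HMcol : forall j, exists i, M i j < 0.
Hypothesis Hq : forall i, 0 < q i 0.
Hypothesis Hdom : NECP_dominance M q.

Definition a i j := - M i j / q i 0.
Definition u j := \big[Num.max/0]_i a i j.
Definition B i j := a i j / u j.
Definition N := normalized (row_mx 1%:M (- M)) (fun i => q i 0).

Lemma a_ge0 i j : 0 <= a i j.
Proof. by rewrite /a divr_ge0 ?oppr_ge0 // ltW. Qed.

Lemma a_le_u i j : a i j <= u j.
Proof. exact: (le_bigmax _ (fun i => a i j)). Qed.

Lemma u_pos j : 0 < u j.
Proof.
have [i Hi] := HMcol j; apply: (lt_le_trans _ (a_le_u i j)).
by rewrite /a divr_gt0 // oppr_gt0.
Qed.

Lemma u_att j : exists i, a i j = u j.
Proof.
have [i0 _ E] := @eq_bigmax _ _ _ 0 j xpredT (fun i => a i j) erefl (fun i _ => a_ge0 i j).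
by exists i0; rewrite /u E.
Qed.

Lemma B_ge0 i j : 0 <= B i j.
Proof. by rewrite /B divr_ge0 ?a_ge0 // ltW ?u_pos. Qed.

Lemma B_le1 i j : B i j <= 1.
Proof. by rewrite /B ler_pdivrMr ?u_pos // mul1r a_le_u. Qed.

Lemma B1E i j : (B i j == 1) = (a i j == u j).
Proof.
by rewrite /B -[X in _ == X](divff (lt0r_neq0 (u_pos j))) (inj_eq (mulIf _)) // invr_eq0 gt_eqF ?u_pos.
Qed.

Lemma Nr i j : N i (rshift n j) = B i j.
Proof.
rewrite /N /normalized /col_scale mxE row_mxEr.
under eq_bigr do rewrite row_mxEr.
rewrite /B /u /a mxE invfM mulrA.
by congr (_ / _); apply: eq_bigr => i0 _; rewrite mxE.
Qed.

Lemma Nl i k : N i (lshift n k) = (i == k)%:R.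
Proof.
rewrite /N /normalized /col_scale mxE row_mxEl.
under eq_bigr do rewrite row_mxEl.
have -> : \big[Num.max/0]_(i0 < n) ((1%:M : 'M[R]_n) i0 k / q i0 0) = (q k 0)^-1.
  apply/le_anti/andP; split.
    apply: bigmax_le => [|i0 _]; first by rewrite invr_ge0 ltW.
    rewrite mxE; case: eqP => [->|_]; first by rewrite mul1r.
    by rewrite mul0r invr_ge0 ltW.
  by apply: (bigmax_sup k) => //; rewrite mxE eqxx mul1r.
rewrite mxE; case: eqP => [->|_]; last by rewrite mul0r.
by rewrite mul1r divff ?invr1 // gt_eqF.
Qed.

Lemma domJ (K : {set 'I_n}) (g : 'I_n -> 'I_n) :
  {in K &, injective g} -> (forall k, k \in K -> B k (g k) = 1) ->
  forall i, \sum_(k in K) B i (g k) + (i \notin K)%:R < 2.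
Proof.
move=> ginj gB i.
pose f k := if k \in K then rshift n (g k) else lshift n k.
have finj : injective f.
  move=> k1 k2; rewrite /f.
  case: (boolP (k1 \in K)) => h1; case: (boolP (k2 \in K)) => h2.
  - by move/rshift_inj; apply: ginj.
  - move/(congr1 val) => /= E; have := ltn_ord k2; rewrite -E.
    by rewrite ltnNge leq_addr.
  - move/(congr1 val) => /= E; have := ltn_ord k1; rewrite E.
    by rewrite ltnNge leq_addr.
  - exact: lshift_inj.
have cov : covers_perm (colsub f N).
  exists 1%g => i0 k; rewrite perm_mx1 [colsub _ _ _ _]mxE [1%:M _ _]mxE /f.
  case: (boolP (k \in K)) => hk.
  - rewrite Nr; case: eqP => [->|_]; first by rewrite gB // subrr.
    by rewrite subr0 B_ge0.
  - by rewrite Nl subrr.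
have := Hdom.2 f finj cov i.
have -> : \sum_(k < n) colsub f N i k = \sum_(k in K) B i (g k) + (i \notin K)%:R.
  rewrite (bigID (mem K)) /=; congr (_ + _).
    by apply: eq_bigr => k hk; rewrite [colsub _ _ _ _]mxE /f hk Nr.
  under eq_bigr => k hk do rewrite [colsub _ _ _ _]mxE /f (negbTE hk) Nl.
  case: (boolP (i \in K)) => hi.
    rewrite big1 // => k hk; case: eqP => // E.
    by move: hi; rewrite E (negbTE hk).
  rewrite (bigD1 i) //= eqxx big1 ?addr0 // => k /andP [_ hk].
  by rewrite eq_sym (negbTE hk).
by [].
Qed.

Lemma uniq1 i i' j : B i j = 1 -> B i' j = 1 -> i = i'.
Proof.
move=> h1 h2.
have inj : {in [set i] &, injective (fun _ : 'I_n => j)}.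
  by move=> x y; rewrite !inE => /eqP -> /eqP ->.
have gB : forall k, k \in [set i] -> B k j = 1 by move=> k; rewrite inE => /eqP ->.
have := @domJ [set i] (fun _ => j) inj gB i'.
rewrite big_set1 inE h2; case: eqP => // _ /=.
by rewrite ltxx.
Qed.

Definition D (Sw Sz : {set 'I_n}) :=
  [/\ exists j, j \in Sz, Sz \subset ~: Sw &
      forall i, i \notin Sw -> exists2 j, j \in Sz & a i j = u j].

Lemma aB i j : a i j = u j -> B i j = 1.
Proof. by move=> h; apply/eqP; rewrite B1E h. Qed.

Lemma Ba i j : B i j = 1 -> a i j = u j.
Proof. by move/eqP; rewrite B1E => /eqP. Qed.

Lemma D_classical Sw Sz : D Sw Sz ->
  exists w z : 'cV[R]_n, NECP_sol M q w z /\ supp w = Sw /\ supp z = Sz.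
Proof.
case=> [[j0 hj0] sub top].
pose T := ~: Sw.
pose sigma i := odflt i [pick j | (j \in Sz) && (a i j == u j)].
have sig_spec i : i \in T -> sigma i \in Sz /\ a i (sigma i) = u (sigma i).
  rewrite inE => /top [j hj ha]; rewrite /sigma; case: pickP => [k /andP [hk /eqP hak]|/(_ j)] //=.
  by rewrite hj ha eqxx.
have sig_inj : {in T &, injective sigma}.
  move=> i1 i2 h1 h2 E; have [_ a1] := sig_spec _ h1; have [_ a2] := sig_spec _ h2.
  apply: (@uniq1 _ _ (sigma i1)); apply: aB => //; by rewrite E.
have SzT : Sz = T.
  apply/eqP; rewrite eqEcard; apply/andP; split; first exact: sub.
  rewrite -(card_in_imset sig_inj); apply: subset_leq_card; apply/fintype.subsetP => _ /imsetP [i hi ->].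
  by case: (sig_spec _ hi).
have sigT : sigma @: T = T.
  apply/eqP; rewrite eqEcard card_in_imset // leqnn andbT; apply/fintype.subsetP => _ /imsetP [i hi ->].
  by rewrite -SzT; case: (sig_spec _ hi).
pose A := \matrix_(i, j) (if (i \in T) && (j \in T) then B i j else (i == j)%:R).
pose pi i := if i \in T then sigma i else i.
have piinj : injective pi.
  move=> i1 i2; rewrite /pi; case: (boolP (i1 \in T)) => h1; case: (boolP (i2 \in T)) => h2.
  - exact: sig_inj.
  - move=> E; have := (sig_spec _ h1).1; rewrite SzT E => h; by rewrite h in h2.
  - move=> E; have := (sig_spec _ h2).1; rewrite SzT -E => h; by rewrite h in h1.
  - by [].
have Api i : A i (pi i) = 1.
  rewrite mxE /pi; case: (boolP (i \in T)) => hi.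
    have [hs ha] := sig_spec _ hi; rewrite -SzT hs /=; exact: aB.
  by rewrite eqxx.
have A0 i j : 0 <= A i j by rewrite mxE; case: ifP => _; [exact: B_ge0 | exact: ler0n].
have sumT i : \sum_(j in T) B i j < 1 + (i \in T)%:R.
  have := @domJ T sigma sig_inj (fun k hk => aB (sig_spec k hk).2) i.
  rewrite -(big_imset (fun j => B i j) sig_inj) /= sigT.
  by case: (i \in T) => /= h; lra.
have As i : \sum_j A i j < 2.
  case: (boolP (i \in T)) => hi.
    have -> : \sum_j A i j = \sum_(j in T) B i j.
      rewrite (bigID (mem T)) /= [X in _ + X]big1 ?addr0.
        by apply: eq_bigr => j hj; rewrite mxE hi hj.
      move=> j hj; rewrite mxE hi (negbTE hj) /=; case: eqP => // E.
      by move: hj; rewrite -E hi.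
    by have := sumT i; rewrite hi /= => h; lra.
  rewrite (bigD1 i) //= big1 ?addr0.
    by rewrite mxE (negbTE hi) eqxx /= ltr1n.
  move=> j hj; rewrite mxE (negbTE hi) /=; by rewrite eq_sym (negbTE hj).
have [x [Ax xb]] := LA piinj Api A0 As.
pose z := \col_j (if j \in T then x j 0 / u j else 0).
have z0 j : 0 <= z j 0.
  rewrite mxE; case: ifP => _ //; rewrite divr_ge0 // ltW ?u_pos //; exact: (xb j).1.
have zpos j : (z j 0 != 0) = (j \in T).
  rewrite mxE; case: ifP => _; last by rewrite eqxx.
  by rewrite gt_eqF // divr_gt0 ?u_pos //; exact: (xb j).1.
have Mz i : (M *m z) i 0 = - q i 0 * \sum_(j in T) B i j * x j 0.
  rewrite mxE mulr_sumr (bigID (mem T)) /= [X in _ + X]big1 ?addr0.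
    apply: eq_bigr => j hj; rewrite mxE hj /B /a.
    have := u_pos j; have := Hq i; move=> h1 h2.
    field; by rewrite ?gt_eqF.
  by move=> j hj; rewrite mxE (negbTE hj) mulr0.
have rowT i : i \in T -> \sum_(j in T) B i j * x j 0 = 1.
  move=> hi; have := congr1 (fun m : 'cV[R]_n => m i 0) Ax; rewrite /= !mxE => <-.
  rewrite [RHS](bigID (mem T)) /= [X in _ = _ + X]big1 ?addr0.
    by apply: eq_bigr => j hj; rewrite mxE hi hj.
  move=> j hj; rewrite mxE hi (negbTE hj) /=; case: eqP => [E|_]; last by rewrite mul0r.
  by move: hj; rewrite -E hi.
have rowS i : i \notin T -> \sum_(j in T) B i j * x j 0 < 1.
  move=> hi; apply: (@le_lt_trans _ _ (\sum_(j in T) B i j)).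
    apply: ler_sum => j _; rewrite -[leRHS]mulr1 ler_wpM2l ?B_ge0 //; exact: (xb j).2.
  by have := sumT i; rewrite (negbTE hi) /= addr0.
pose w := M *m z + q.
have wE i : w i 0 = q i 0 * (1 - \sum_(j in T) B i j * x j 0).
  by rewrite /w mxE Mz mulrBr mulr1 mulNr addrC.
have w0 i : (w i 0 != 0) = (i \notin T).
  rewrite wE; case: (boolP (i \in T)) => hi /=.
    by rewrite rowT // subrr mulr0 eqxx.
  by rewrite mulf_neq0 // ?gt_eqF // subr_gt0 rowS.
have wge0 i : 0 <= w i 0.
  rewrite wE; case: (boolP (i \in T)) => hi; first by rewrite rowT // subrr mulr0.
  apply: mulr_ge0; first exact: ltW.
  by rewrite subr_ge0; apply: ltW; apply: rowS.
exists w, z; split; last split.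
- split.
  + by [].
  + apply: big1 => i _; case: (boolP (i \in T)) => hi.
      by have := w0 i; rewrite hi /= => /negbFE/eqP ->; rewrite mul0r.
    by have := zpos i; rewrite (negbTE hi) => /negbFE/eqP ->; rewrite mulr0.
  + have := zpos j0; rewrite -SzT hj0; apply: contraTneq => ->; by rewrite mxE eqxx.
  + exact: wge0.
  + exact: z0.
- by apply/setP => i; rewrite !inE w0 !inE negbK.
- by apply/setP => i; rewrite inE zpos SzT.
Qed.

Lemma classical_D w z : NECP_sol M q w z -> D (supp w) (supp z).
Proof.
case=> wE wz znz w0 z0.
pose y j := u j * z j 0.
have y0 j : 0 <= y j by rewrite mulr_ge0 // ltW ?u_pos.
have rowE i : \sum_j B i j * y j = 1 - w i 0 / q i 0.
  have -> : \sum_j B i j * y j = - (\sum_j M i j * z j 0) / q i 0.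
    rewrite mulNr mulr_suml -sumrN; apply: eq_bigr => j _.
    rewrite /y /B /a; have := u_pos j; have := Hq i; move=> h1 h2.
    field; by rewrite ?gt_eqF.
  rewrite wE !mxE; have := Hq i; move=> h1; field; by rewrite gt_eqF.
have rowle i : \sum_j B i j * y j <= 1.
  rewrite rowE; have := divr_ge0 (w0 i) (ltW (Hq i)).
  move: (w i 0 / q i 0) => t; lra.
split.
- case: (pickP (fun j => z j 0 != 0)) => [j hj|h]; first by exists j; rewrite inE.
  exfalso; move/negP: znz; apply; apply/eqP/matrixP => j k; rewrite (ord1 k) mxE.
  by have := h j; move/negbFE/eqP.
- apply/fintype.subsetP => j; rewrite !inE => hz; rewrite negbK.
  have := @psumr_eq0P _ _ xpredT (fun i => w i 0 * z i 0) (fun i _ => mulr_ge0 (w0 i) (z0 i)) wz j erefl.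
  by move/eqP; rewrite mulf_eq0 (negbTE hz) orbF.
move=> i; rewrite inE negbK => /eqP wi0.
case: (boolP [exists j, (j \in supp z) && (a i j == u j)]) => [/existsP [j /andP [hj /eqP ha]]|hne].
  by exists j.
exfalso.
pose r j := odflt j [pick i0 | a i0 j == u j].
have r_spec j : a (r j) j = u j.
  rewrite /r; case: pickP => [i0 /eqP //|h]; have [i0 hi0] := u_att j.
  by have := h i0; rewrite hi0 eqxx.
pose K := r @: supp z.
have iK : i \notin K.
  apply/negP => /imsetP [j hj E]; move/existsP: hne; apply; exists j.
  by rewrite hj E r_spec eqxx.
pose cand k j := (j \in supp z) && (r j == k).
pose g k := odflt k [pick j | cand k j && [forall j', cand k j' ==> (B i j' <= B i j)]].
have g_spec k : k \in K -> cand k (g k) /\ (forall j', cand k j' -> B i j' <= B i (g k)).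
  case/imsetP => j0 hj0 Ek.
  have cj0 : cand k j0 by rewrite /cand hj0 Ek eqxx.
  rewrite /g; case: pickP => [j /andP [cj /forallP H]|h].
    split => // j' cj'; exact: (implyP (H j') cj').
  exfalso; have := h [arg max_(j > j0 | cand k j) B i j]%O.
  case: arg_maxP => // j1 cj1 Hm; rewrite cj1 /=.
  move/negP; apply; apply/forallP => j'; apply/implyP => cj'; exact: Hm.
have ginj : {in K &, injective g}.
  move=> k1 k2 h1 h2 E; have [/andP [_ /eqP r1] _] := g_spec _ h1.
  have [/andP [_ /eqP r2] _] := g_spec _ h2; by rewrite -r1 -r2 E.
have gB k : k \in K -> B k (g k) = 1.
  move=> hk; have [/andP [_ /eqP r1] _] := g_spec _ hk; apply: aB; by rewrite -{1}r1 r_spec.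
have dom := domJ ginj gB i; rewrite iK /= in dom.
have cls k : k \in K -> \sum_(j | cand k j) y j <= 1.
  move=> hk; apply: le_trans (rowle k).
  apply: (@le_trans _ _ (\sum_(j | cand k j) B k j * y j)).
    apply: ler_sum => j /andP [_ /eqP rj]; by rewrite -rj (aB (r_spec j)) mul1r.
  apply: sum_sub_le => // j; exact: mulr_ge0 (B_ge0 _ _) (y0 j).
have : 1 <= \sum_(k in K) B i (g k).
  have <- : \sum_j B i j * y j = 1 by rewrite rowE wi0 mul0r subr0.
  have -> : \sum_j B i j * y j = \sum_(j in supp z) B i j * y j.
    rewrite [LHS](bigID (mem (supp z))) /= [X in _ + X]big1 ?addr0 //.
    by move=> j; rewrite inE negbK => /eqP zj; rewrite /y zj !mulr0.
  rewrite (partition_big r (mem K)) /=; last by move=> j hj; apply: imset_f.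
  apply: ler_sum => k hk.
  apply: (@le_trans _ _ (B i (g k) * \sum_(j | cand k j) y j)).
    rewrite mulr_sumr; apply: ler_sum => j cj; rewrite ler_wpM2r //.
    exact: (g_spec k hk).2 j cj.
  by rewrite -[leRHS]mulr1 ler_wpM2l ?B_ge0 ?cls.
move: dom; move: (\sum_(k in K) B i (g k)) => t; lra.
Qed.

Lemma Mneg i j : M i j != 0 -> 0 < - M i j.
Proof. by move=> h; rewrite oppr_gt0 lt_neqAle h HMle0. Qed.

Lemma lnA i j : M i j != 0 -> ln (a i j) = ln (- M i j) - ln (q i 0).
Proof.
move=> h; rewrite /a lnM ?posrE ?invr_gt0 ?Mneg // lnV // ?posrE ?Hq // invr_gt0.
Qed.

Lemma a_pos i j : M i j != 0 -> 0 < a i j.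
Proof. by move=> h; rewrite /a divr_gt0 ?Mneg. Qed.

Lemma a0 i j : M i j = 0 -> a i j = 0.
Proof. by move=> h; rewrite /a h oppr0 mul0r. Qed.

Lemma Tlog_q i : Tlog (q i 0) = (ln (q i 0))%:E.
Proof. by rewrite /Tlog gt_eqF. Qed.

Lemma Tlog_M i j : M i j != 0 -> Tlog (- M i j) = (ln (- M i j))%:E.
Proof. by move=> h; rewrite /Tlog oppr_eq0 (negbTE h). Qed.

Lemma Tlog_M0 i j : M i j = 0 -> Tlog (- M i j) = -oo%E.
Proof. by move=> h; rewrite /Tlog h oppr0 eqxx. Qed.

Lemma adde_Ny (x y : \bar R) : x != +oo%E -> y != +oo%E -> (x + y = -oo)%E ->
  x = -oo%E \/ y = -oo%E.
Proof. by case: x => [r| |]; case: y => [s| |] => //=; auto. Qed.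

Lemma tropical_D w z :
  TNECP_sol (fun i j => Tlog (- M i j)) (fun i => Tlog (q i 0%R)) w z ->
  D (tsupp w) (tsupp z).
Proof.
case=> hfin heq hcomp [j0 hj0].
have t1 i j : (Tlog (- M i j) + z j <= Tlog (q i 0%R))%E.
  rewrite -(heq i) le_max; apply/orP; right.
  exact: (le_bigmax _ (fun j => Tlog (- M i j) + z j)%E j).
split.
- by exists j0; rewrite inE.
- apply/fintype.subsetP => j; rewrite !inE => hz; rewrite negbK.
  have := le_bigmax -oo%E (fun i => w i + z i)%E j; rewrite hcomp leeNy_eq => /eqP.
  case/(adde_Ny (hfin j).1 (hfin j).2) => [-> //| hzj].
  by rewrite hzj eqxx in hz.
move=> i; rewrite inE negbK => /eqP wi.
have := heq i; rewrite /= wi maxNye Tlog_q => hs.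
have [j _ hj] := @eq_bigmax _ _ _ -oo%E i xpredT (fun j => (Tlog (- M i j) + z j)%E) erefl (fun _ _ => leNye _).
rewrite hs in hj.
have hzj := t1 i j; have hfj := (hfin j).2.
move: hj hzj hfj; case hz: (z j) => [zeta| |] //; last by rewrite addeNy.
move=> hj _ _.
case: (eqVneq (M i j) 0) => [M0|Mn0]; first by move: hj; rewrite Tlog_M0.
move: hj; rewrite Tlog_M // -EFinD => -[hj].
exists j; first by rewrite inE hz.
apply/le_anti/andP; split; first exact: a_le_u.
apply: bigmax_le => [|i' _]; first exact: a_ge0.
case: (eqVneq (M i' j) 0) => [M0'|Mn0']; first by rewrite a0 // a_ge0.
have := t1 i' j; rewrite hz Tlog_M // Tlog_q -EFinD lee_fin => h.
rewrite -ler_ln ?posrE ?a_pos // !lnA //.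
lra.
Qed.

Lemma D_tropical Sw Sz : D Sw Sz ->
  exists w z : 'I_n -> \bar R,
    TNECP_sol (fun i j => Tlog (- M i j)) (fun i => Tlog (q i 0%R)) w z
    /\ tsupp w = Sw /\ tsupp z = Sz.
Proof.
case=> [[j0 hj0] sub top].
pose z j := if j \in Sz then (- ln (u j))%:E else -oo%E.
pose w i := if i \in Sw then (ln (q i 0%R))%:E else -oo%E.
have term i j : (Tlog (- M i j) + z j <= (ln (q i 0%R))%:E)%E.
  rewrite /z; case: ifP => _; last by rewrite addeNy leNye.
  case: (eqVneq (M i j) 0) => [M0|Mn0]; first by rewrite Tlog_M0 // addNye leNye.
  rewrite Tlog_M // -EFinD lee_fin.
  have := a_le_u i j; rewrite -ler_ln ?posrE ?a_pos ?u_pos // lnA //.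
  lra.
have termeq i j : a i j = u j -> (Tlog (- M i j) + z j)%E = (ln (q i 0%R))%:E ->
  True by [].
exists w, z; split; last split.
- split.
  + by move=> i; rewrite /w /z; split; case: ifP.
  + move=> i /=; rewrite Tlog_q.
    have Sle : (\big[maxe/-oo%E]_j (Tlog (- M i j) + z j) <= (ln (q i 0%R))%:E)%E.
      by apply: bigmax_le => [|j _]; [exact: leNye | exact: term].
    rewrite /w; case: ifP => hi; first by apply/max_idPl.
    rewrite maxNye; apply/le_anti; rewrite Sle /=.
    have [j hj ha] := top i (negbT hi).
    apply: (bigmax_sup j) => //.
    have Mn0 : M i j != 0 by apply: contraTneq (u_pos j) => M0; rewrite -ha a0 // ltxx.
    rewrite /z hj Tlog_M // -EFinD lee_fin.
    rewrite -ha lnA //; lra.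
  + apply: big1 => i _; rewrite /w /z; case: ifP => hw; case: ifP => hz.
    * by move/fintype.subsetP: sub => /(_ i hz); rewrite inE hw.
    * by rewrite addeNy.
    * by rewrite addNye.
    * by rewrite addNye.
  + by exists j0; rewrite /z hj0.
- by apply/setP => i; rewrite inE /w; case: ifP.
- by apply/setP => i; rewrite inE /z; case: ifP.
Qed.

End Main.

Unset Implicit Arguments.

Theorem theorem1p4 (R : realType) (n : nat) (M : 'M[R]_n) (q : 'cV[R]_n)
  (HMle0 : forall i j, M i j <= 0)
  (HMcol : forall j, exists i, M i j < 0)
  (Hq : forall i, 0 < q i 0)
  (Hdom : NECP_dominance M q) :
  forall Sw Sz : {set 'I_n},
    (exists w z : 'cV[R]_n, NECP_sol M q w z /\ supp w = Sw /\ supp z = Sz) <->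
    (exists w z : 'I_n -> \bar R,
        TNECP_sol (fun i j => Tlog (- M i j)) (fun i => Tlog (q i 0)) w z
        /\ tsupp w = Sw /\ tsupp z = Sz).
Proof.
move=> Sw Sz; split.
- case=> w [z [hs [<- <-]]].
  apply: D_tropical; try assumption.
  by apply: classical_D.
- case=> w [z [hs [<- <-]]].
  apply: D_classical; try assumption.
  by apply: tropical_D.
Qed.
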